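(* Let $k$ be a field of characteristic zero, ${\boldsymbol\lambda}\in M_n(k)$ antisymmetric, and $K=k_{\boldsymbol\lambda}(x_1,\dots,x_n)$. (a) If $B_{\boldsymbol\lambda}$ is the $k$-subspace of $K$ spanned by $\{\{f,g\}: f,g\in K\}$, then $B_{\boldsymbol\lambda}\cap k=\{0\}$. (b) For an $n$-tuple $y=(y_1,\dots,y_n)$ of nonzero elements of $K$, let $C_{\boldsymbol\lambda}(y)$ be the matrix $\big(\{y_i,y_j\}(y_iy_j)^{-1}\big)\in M_n(K)$, and let $C_{\boldsymbol\lambda}=\{C_{\boldsymbol\lambda}(y): y\in(K^\times)^n\}$. Then $C_{\boldsymbol\lambda}\cap M_n(k)=\{A{\boldsymbol\lambda}A^{\mathrm{tr}}: A\in M_n(\mathbb Z)\}$.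
   Context: For antisymmetric ${\boldsymbol\lambda}\in M_n(k)$, $k_{\boldsymbol\lambda}(x_1,\dots,x_n)$ is the rational function field $k(x_1,\dots,x_n)$ with the unique Poisson bracket satisfying $\{x_i,x_j\}=\lambda_{ij}x_ix_j$ for all $i,j$. *)

(* Defs.v *)
From HB Require Import structures.
From mathcomp Require Import all_boot all_order all_algebra.
From mathcomp Require Import fraction generic_quotient.
From mathcomp.multinomials Require Import mpoly.
Set Implicit Arguments. Unset Strict Implicit. Unset Printing Implicit Defensive.
Import Order.TTheory GRing.Theory Num.Theory.
Local Open Scope ring_scope.

Definition ratfun (k : fieldType) (n : nat) := {fraction {mpoly k[n]}}.

Definition ratC (k : fieldType) (n : nat) (c : k) : ratfun k n :=
  tofrac (c%:MP).

Definition ratX (k : fieldType) (n : nat) (i : 'I_n) : ratfun k n :=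
  tofrac ('X_i).

(* partial derivative d/dx_i on K, computed from any representative p/q by
   the quotient rule (p' q - p q') / q^2 (independent of the representative) *)
Definition ratD (k : fieldType) (n : nat) (i : 'I_n) (f : ratfun k n) : ratfun k n :=
  let r := repr f in
  let p := (frac r).1 in let q := (frac r).2 in
  tofrac (mderiv i p * q - p * mderiv i q) / tofrac (q ^+ 2).

(* the Poisson bracket of k_lambda(x_1..x_n):
   {f,g} = sum_{i,j} lambda_ij x_i x_j (df/dx_i) (dg/dx_j),
   i.e. the unique Poisson bracket with {x_i,x_j} = lambda_ij x_i x_j. *)
Definition pbracket (k : fieldType) (n : nat) (lam : 'M[k]_n)
  (f g : ratfun k n) : ratfun k n :=
  \sum_(i < n) \sum_(j < n)
     ratC n (lam i j) * ratX k i * ratX k j * ratD i f * ratD j g.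

Definition Cmat (k : fieldType) (n : nat) (lam : 'M[k]_n)
  (y : 'I_n -> ratfun k n) : 'M[ratfun k n]_n :=
  \matrix_(i, j) (pbracket lam (y i) (y j) / (y i * y j)).

(* Main.v *)
Require Import Defs.
From HB Require Import structures.
From mathcomp Require Import all_boot all_order all_algebra.
From mathcomp Require Import fraction generic_quotient.
From mathcomp.multinomials Require Import mpoly.
From mathcomp Require Import ring lra zify.
From Stdlib Require Import Lia.
Import Order.TTheory GRing.Theory Num.Theory.
Local Open Scope ring_scope.
Set Implicit Arguments. Unset Strict Implicit. Unset Printing Implicit Defensive.

Section S.
Variables (k : fieldType) (n : nat).
Local Notation R := {mpoly k[n]}.
Local Notation K := (ratfun k n).
Local Notation "x %:F" := (@tofrac R x).

Lemma frac_repr (f : K) : f = (\n_(repr f))%:F / (\d_(repr f))%:F.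
Proof.
rewrite -[f in LHS]reprK; set r := repr f.
have d0 := denom_ratioP r.
unlock tofrac.
rewrite [X in _ = X]piE.
apply/eqmodP; rewrite /= FracField.equivfE /FracField.mulf /FracField.invf /=.
rewrite !numden_Ratio ?oner_neq0 ?mulf_neq0 ?oner_neq0 //.
by apply/eqP; ring.
Qed.

Lemma fracE (a b c d : R) : b != 0 -> d != 0 ->
  (a%:F / b%:F == c%:F / d%:F) = (a * d == c * b).
Proof.
move=> b0 d0; rewrite eqr_div ?tofrac_eq0 // -!tofracM tofrac_eq //.
Qed.

Lemma repr_d0 (f : K) : \d_(repr f) != 0.
Proof. exact: denom_ratioP. Qed.

Lemma ratD_frac i (p q : R) : q != 0 ->
  ratD i (p%:F / q%:F) = (p^`M(i) * q - p * q^`M(i))%:F / (q ^+ 2)%:F.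
Proof.
move=> q0; rewrite /ratD.
set f := p%:F / q%:F.
have E : f = (\n_(repr f))%:F / (\d_(repr f))%:F by exact: frac_repr.
move: (repr_d0 f) E; set p' := \n_(repr f); set q' := \d_(repr f) => q'0 E.
have h1 : p' * q = p * q'.
  by apply/eqP; rewrite -fracE // -E.
have h2 := congr1 (mderiv i) h1; rewrite !mderivM in h2.
apply/eqP; rewrite fracE ?expf_neq0 //; apply/eqP.
apply/eqP; rewrite -subr_eq0.
have -> : (p'^`M(i) * q' - p' * q'^`M(i)) * q ^+ 2 -
   (p^`M(i) * q - p * q^`M(i)) * q' ^+ 2 =
   q * q' * ((p'^`M(i) * q + p' * q^`M(i)) - (p^`M(i) * q' + p * q'^`M(i)))
   - (p' * q - p * q') * (q * q'^`M(i) + q' * q^`M(i)) by ring.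
by rewrite h1 h2 !subrr mulr0 mul0r subrr.
Qed.

Definition dp_def (i : 'I_n) (p : R) : R := 'X_i * p^`M(i).
Fact dp_key : unit. Proof. by []. Qed.
Definition dp := locked_with dp_key dp_def.
Lemma dpE i p : dp i p = 'X_i * p^`M(i).
Proof. by rewrite /dp unlock. Qed.

Lemma dp_coef i p a : (dp i p)@_a = (a i)%:R * p@_a.
Proof.
rewrite dpE mulrC.
have [ai|ai] := posnP (a i).
  rewrite ai mul0r; apply/memN_msupp_eq0.
  rewrite (perm_mem (msuppMX _ _)); apply/mapP => -[m' _ am].
  by move: ai; rewrite am mnmDE mnm1E eqxx.
have le : (U_(i) <= a)%MM by rewrite lep1mP -lt0n.
have ea : a = (U_(i) + (a - U_(i)))%MM by rewrite addmC submK.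
rewrite {1}ea mcoeffMX mcoeff_deriv addmC -ea mnmBE mnm1E eqxx.
by rewrite subn1 prednK // mulr_natl.
Qed.

Lemma dp_lin i : linear (dp i).
Proof. by move=> c p q; apply/mpolyP => a; rewrite mcoeffD mcoeffZ !dp_coef mcoeffD mcoeffZ; ring. Qed.

Lemma dpD i p q : dp i (p + q) = dp i p + dp i q.
Proof. by apply/mpolyP => a; rewrite mcoeffD !dp_coef mcoeffD; ring. Qed.
Lemma dpN i p : dp i (- p) = - dp i p.
Proof. by apply/mpolyP => a; rewrite mcoeffN !dp_coef mcoeffN; ring. Qed.
Lemma dpB i p q : dp i (p - q) = dp i p - dp i q.
Proof. by rewrite dpD dpN. Qed.
Lemma dpZ i c p : dp i (c *: p) = c *: dp i p.
Proof. by apply/mpolyP => a; rewrite mcoeffZ !dp_coef mcoeffZ; ring. Qed.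
Lemma dp0 i : dp i 0 = 0.
Proof. by rewrite dpE mderiv0 mulr0. Qed.
Lemma dpC i c : dp i c%:MP = 0.
Proof. by rewrite dpE mderivC mulr0. Qed.
Lemma dpM i p q : dp i (p * q) = dp i p * q + p * dp i q.
Proof. by rewrite !dpE mderivM; ring. Qed.
Lemma dpX i m : dp i 'X_[m] = (m i)%:R *: 'X_[m].
Proof. by apply/mpolyP => a; rewrite mcoeffZ dp_coef !mcoeffX; case: eqP => [->|_]; rewrite ?mulr0 //; ring. Qed.
Lemma dp_sum i (I : Type) (r : seq I) (P : pred I) (F : I -> R) :
  dp i (\sum_(j <- r | P j) F j) = \sum_(j <- r | P j) dp i (F j).
Proof.
exact: (big_morph _ (dpD i) (dp0 i)).
Qed.
Lemma dp_comm i j p : dp i (dp j p) = dp j (dp i p).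
Proof. by apply/mpolyP => a; rewrite !dp_coef; ring. Qed.

Lemma fracP (f : K) : exists a b, b != 0 /\ f = a%:F / b%:F.
Proof. by exists (\n_(repr f)), (\d_(repr f)); split; [apply: repr_d0|apply: frac_repr]. Qed.

Lemma tf0 (b : R) : b != 0 -> b%:F != 0.
Proof. by rewrite tofrac_eq0. Qed.

Lemma fracD (a b c d : R) : b != 0 -> d != 0 ->
  a%:F / b%:F + c%:F / d%:F = (a * d + c * b)%:F / (b * d)%:F.
Proof.
move=> /tf0 b0 /tf0 d0; have -> := @addf_div _ a%:F b%:F c%:F d%:F b0 d0.
by rewrite -!tofracM -tofracD.
Qed.

Lemma fracM (a b c d : R) :
  (a%:F / b%:F) * (c%:F / d%:F) = (a * c)%:F / (b * d)%:F.
Proof. by rewrite mulf_div -!tofracM. Qed.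

Lemma frac_eqP (a b c d : R) : b != 0 -> d != 0 -> a * d = c * b ->
  a%:F / b%:F = c%:F / d%:F.
Proof. by move=> b0 d0 e; apply/eqP; rewrite fracE // e. Qed.

Lemma frac1 (a : R) : a%:F = a%:F / 1%:F.
Proof. by rewrite tofrac1 divr1. Qed.

Definition dK (i : 'I_n) (f : K) : K := ratX k i * ratD i f.

Lemma dK_frac i (p q : R) : q != 0 ->
  dK i (p%:F / q%:F) = (dp i p * q - p * dp i q)%:F / (q ^+ 2)%:F.
Proof.
move=> q0; rewrite /dK ratD_frac // /ratX mulrA -tofracM.
by congr (tofrac _ / _); rewrite !dpE; ring.
Qed.

Lemma dKD i f g : dK i (f + g) = dK i f + dK i g.
Proof.
have [a [b [b0 ->]]] := fracP f; have [c [d [d0 ->]]] := fracP g.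
rewrite fracD //.
have bd0 : b * d != 0 by rewrite mulf_neq0.
rewrite !dK_frac // fracD ?expf_neq0 //.
apply: frac_eqP; rewrite ?mulf_neq0 ?expf_neq0 //.
rewrite !dpD !dpM; ring.
Qed.

Lemma dKM i f g : dK i (f * g) = dK i f * g + f * dK i g.
Proof.
have [a [b [b0 ->]]] := fracP f; have [c [d [d0 ->]]] := fracP g.
have bd0 : b * d != 0 by rewrite mulf_neq0.
rewrite fracM !dK_frac // !fracM fracD ?mulf_neq0 ?expf_neq0 //.
apply: frac_eqP; rewrite ?mulf_neq0 ?expf_neq0 //.
rewrite !dpM; ring.
Qed.

Lemma dKC i c : dK i (ratC n c) = 0.
Proof.
rewrite /ratC frac1 dK_frac ?oner_neq0 // dpC -(mpolyC1 n k) dpC.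
by rewrite !(mulr0, mul0r) subrr tofrac0 mul0r.
Qed.

Lemma dK0 i : dK i 0 = 0.
Proof. by have := dKC i 0; rewrite /ratC mpolyC0 tofrac0. Qed.

Lemma dKZ i c f : dK i (ratC n c * f) = ratC n c * dK i f.
Proof. by rewrite dKM dKC mul0r add0r. Qed.

Lemma dK_sum i (I : Type) (r : seq I) (P : pred I) (F : I -> K) :
  dK i (\sum_(j <- r | P j) F j) = \sum_(j <- r | P j) dK i (F j).
Proof. exact: (big_morph _ (dKD i) (dK0 i)). Qed.

Lemma dK_comm i j f : dK i (dK j f) = dK j (dK i f).
Proof.
have [a [b [b0 ->]]] := fracP f.
rewrite !dK_frac ?expf_neq0 //.
apply: frac_eqP; rewrite ?expf_neq0 //.
rewrite !dpB !dpM ?expr2 ?dpM (dp_comm i j a) (dp_comm i j b); ring.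
Qed.

Lemma msize_le_supp (p : R) B : (forall a, a \in msupp p -> mdeg a < B)%N -> (msize p <= B)%N.
Proof. by move=> h; rewrite msizeE; apply/bigmax_leqP_seq => a /h. Qed.

Lemma msizeM_le' (p q : R) : (msize (p * q) <= (msize p + msize q).-1)%N.
Proof.
apply: msize_le_supp => a /msuppM_le /allpairsP [[m1 m2] /= [h1 h2 ->]].
rewrite mdegD; have := msize_mdeg_lt h1; have := msize_mdeg_lt h2; lia.
Qed.

Lemma msize_dp i (p : R) : (msize (dp i p) <= msize p)%N.
Proof.
apply: msize_le_supp => a; rewrite mcoeff_msupp dp_coef => h.
apply: msize_mdeg_lt; rewrite mcoeff_msupp; apply: contraNN h => /eqP ->.
by rewrite mulr0.
Qed.

Lemma msizeX_le (p : R) r : (msize (p ^+ r.+1) <= r.+1 * msize p - r)%N.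
Proof.
elim: r => [|r ih]; first by rewrite expr1 mul1n subn0.
rewrite exprS; apply: leq_trans (msizeM_le' _ _) _.
move: ih; set s := msize p; set t := msize _; nia.
Qed.

Lemma msizeD_le' (p q : R) B : (msize p <= B)%N -> (msize q <= B)%N -> (msize (p + q) <= B)%N.
Proof. by move=> h1 h2; apply: leq_trans (msizeD_le _ _) _; rewrite geq_max h1 h2. Qed.

Lemma msize_sum_le (I : Type) (r : seq I) (P : pred I) (F : I -> R) B :
  (forall i, P i -> msize (F i) <= B)%N -> (msize (\sum_(i <- r | P i) F i) <= B)%N.
Proof.
move=> h; apply: (big_ind (fun x => msize x <= B)%N) => //.
- by rewrite msize0.
- by move=> x y; apply: msizeD_le'.
Qed.

Lemma msizeN' (p : R) : msize (- p) = msize p.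
Proof. exact: msizeN. Qed.

Lemma msizeMC (x : nat) (p : R) : (msize (x%:R * p) <= msize p)%N.
Proof. by rewrite -mpolyC_nat mul_mpolyC msizeZ_le. Qed.

End S.

Section S2.
Variables (k : fieldType) (n : nat).
Local Notation R := {mpoly k[n]}.
Local Notation K := (ratfun k n).
Local Notation "x %:F" := (@tofrac R x).
Local Notation dp := (@dp k n).
Lemma polyA_top (m : 'X_{1..n}) (Q : R) (u : 'I_n -> R) (c : k) :
  Q@_m != 0 ->
  (forall a, a \in msupp Q -> a != m -> mdeg a < mdeg m)%N ->
  \sum_i (dp i (u i) * Q - u i * dp i Q) = c%:MP * Q ^+ 2 -> c = 0.
Proof.
move=> lc0 top eq.
set D := mdeg m. set lc := Q@_m.
set F := 'X_[m] - lc^-1 *: Q.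
have hF : (msize F <= D)%N.
  apply: msize_le_supp => a; rewrite mcoeff_msupp /F mcoeffB mcoeffZ mcoeffX.
  have [<-|ne] := eqVneq m a.
    by rewrite mulVf // subrr eqxx.
  rewrite sub0r oppr_eq0 mulf_eq0 invr_eq0 (negbTE lc0) /= => qa.
  by apply: top; rewrite ?mcoeff_msupp // eq_sym.
have ilc : lc^-1%:MP * lc%:MP = 1 :> R by rewrite -mpolyCM mulVf // mpolyC1.
have hQ : Q = lc%:MP * ('X_[m] - F).
  rewrite /F subKr -mul_mpolyC mulrA.
  by rewrite -mpolyCM mulfV // mpolyC1 mul1r.
have Q0 : Q != 0 by apply: contraNneq lc0 => ->; rewrite mcoeff0.
have sQ : msize Q = D.+1.
  apply/eqP; rewrite eqn_leq; apply/andP; split.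
  - apply: msize_le_supp => a aQ; have [->|ne] := eqVneq a m; first by [].
    by apply: ltnW; apply: top.
  - by apply: msize_mdeg_lt; rewrite mcoeff_msupp.
have hN : forall i, (msize (u i) <= \max_(i < n) msize (u i))%N.
  by move=> i; apply: (@leq_bigmax _ (fun i => msize (u i))).
set N := (\max_(i < n) msize (u i))%N in hN.
clearbody N.
set Xm := ('X_[m] : R) in hQ *.
set S := \sum_(j < N.+1) Xm ^+ (N.+1.-1 - j) * F ^+ j.
have hS : Xm ^+ N.+1 - F ^+ N.+1 = (Xm - F) * S by rewrite subrXX.
set M := (m *+ N.+1)%MM.
have XM : 'X_[M] = Xm ^+ N.+1 by rewrite mpolyXn.
pose P i := lc^-1%:MP * (u i * S).
pose E i := u i * F ^+ N.+1.
have K1 : forall i, u i * 'X_[M] = Q * P i + E i.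
  move=> i; rewrite XM /P /E hQ.
  transitivity ((lc^-1%:MP * lc%:MP) * ((Xm - F) * S) * u i + u i * F ^+ N.+1);
    last by ring.
  by rewrite ilc mul1r -hS; ring.
have K2 : forall i, 'X_[M] * (dp i (u i) * Q - u i * dp i Q) =
   Q ^+ 2 * (dp i (P i) - (M i)%:R * P i) +
   ((dp i (E i) - (M i)%:R * E i) * Q - E i * dp i Q).
  move=> i; have h1 := K1 i; have h2 := congr1 (dp i) h1.
  rewrite dpM dpD dpM dpX -mul_mpolyC mpolyC_nat in h2.
  apply/eqP; rewrite -subr_eq0; apply/eqP.
  transitivity (Q * ((dp i (u i) * 'X_[M] + u i * ((M i)%:R * 'X_[M])) -
                     (dp i Q * P i + Q * dp i (P i) + dp i (E i)))
     - (dp i Q + (M i)%:R * Q) * (u i * 'X_[M] - (Q * P i + E i))); first by ring.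
  by rewrite h1 h2 !subrr; ring.
have K3 : 'X_[M] * (c%:MP * Q ^+ 2) =
   Q ^+ 2 * \sum_i (dp i (P i) - (M i)%:R * P i) +
   \sum_i ((dp i (E i) - (M i)%:R * E i) * Q - E i * dp i Q).
  by rewrite -eq mulr_sumr mulr_sumr -big_split /=; apply: eq_bigr => i _; exact: K2.
set G := c%:MP * 'X_[M] - \sum_i (dp i (P i) - (M i)%:R * P i).
have K4 : G * Q ^+ 2 =
   \sum_i ((dp i (E i) - (M i)%:R * E i) * Q - E i * dp i Q).
  transitivity ('X_[M] * (c%:MP * Q ^+ 2) - Q ^+ 2 * \sum_i (dp i (P i) - (M i)%:R * P i));
    first by rewrite /G; ring.
  by rewrite K3; ring.
have GM : G@_M = c.
  rewrite /G mcoeffB mcoeffCM mcoeffX eqxx mulr1 raddf_sum big1 ?subr0 // => i _.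
  have -> : (M i)%:R * P i = ((M i)%:R : k) *: P i by rewrite -mul_mpolyC mpolyC_nat.
  by rewrite /= mcoeffB dp_coef mcoeffZ subrr.
apply/eqP; apply/negPn/negP => c0.
have G0 : G != 0 by apply: contraNneq c0 => G0; rewrite -GM G0 mcoeff0.
have sG : (mdeg M < msize G)%N by apply: msize_mdeg_lt; rewrite mcoeff_msupp GM.
rewrite mdegMn -/D in sG.
have Q20 : Q ^+ 2 != 0 by rewrite expf_neq0.
have sQ2 : msize (Q ^+ 2) = (D + D).+1 by rewrite expr2 msizeM // sQ addSn addnS.
have sL : msize (G * Q ^+ 2) = (msize G + D + D)%N.
  by rewrite msizeM // sQ2 addnS /= addnA.
have [D0|Dpos] := posnP D.
  have F0 : F = 0 by apply/eqP; rewrite -msize_poly_eq0 -leqn0 -D0.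
  move: K4; rewrite big1 => [/eqP|i _]; last by rewrite /E F0 expr0n /= !mulr0 dp0 !(mulr0, mul0r, subrr).
  by rewrite mulf_eq0 (negbTE G0) (negbTE Q20).
have sE : forall i, (msize (E i) <= (N.+1 * D - N) + N - 1)%N.
  move=> i; apply: leq_trans (msizeM_le' _ _) _.
  have h1 := hN i.
  have := msizeX_le F N; have : (msize F <= D)%N := hF.
  set f := msize F; set e := msize _; move=> hf he.
  have : (N.+1 * f <= N.+1 * D)%N by rewrite leq_mul2l hf orbT.
  lia.
have sR : (msize (\sum_i ((dp i (E i) - (M i)%:R * E i) * Q - E i * dp i Q))
            <= (N.+1 * D - N) + N - 1 + D)%N.
  apply: msize_sum_le => i _; apply: msizeD_le'; rewrite ?msizeN';
    apply: leq_trans (msizeM_le' _ _) _.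
  - have h : (msize (dp i (E i) - (M i)%:R * E i) <= msize (E i))%N.
      by apply: msizeD_le'; rewrite ?msizeN' ?msize_dp ?msizeMC.
    have := sE i; rewrite sQ; lia.
  - have := sE i; have := msize_dp i Q; rewrite sQ; lia.
move: sR; rewrite -K4 sL.
have : (N.+1 <= N.+1 * D)%N by rewrite leq_pmulr.
move: sG; set X := (N.+1 * D)%N; rewrite mulnC -/X; lia.
Qed.
End S2.

Section Phi.
Variables (k : fieldType) (n : nat) (w : 'I_n -> nat).
Local Notation R := {mpoly k[n]}.
Local Notation dp := (@dp k n).

Definition wm (a : 'X_{1..n}) : 'X_{1..n} := [multinom (w i * a i)%N | i < n].
Definition lqw : n.-tuple R := [tuple 'X_[U_(i) *+ w i] | i < n].
Definition phi (p : R) : R := p \mPo lqw.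

Lemma phiX a : phi 'X_[a] = 'X_[wm a].
Proof.
rewrite /phi comp_mpolyX.
under eq_bigr => i _ do rewrite tnth_mktuple.
rewrite mprodXnE; congr 'X_[_]; apply/mnmP => j.
rewrite mnm_sumE mnmE (bigD1 j) //= big1 => [|i ij].
  by rewrite mulmnE mulmnE mnm1E eqxx mul1n addn0.
by rewrite !mulmnE mnm1E (negbTE ij).
Qed.

Lemma phiE p : phi p = \sum_(a <- msupp p) p@_a *: 'X_[wm a].
Proof.
rewrite /phi comp_mpolyEX; apply: eq_bigr => a _.
by rewrite -/(phi _) phiX.
Qed.

Lemma phiZ c p : phi (c *: p) = c *: phi p.
Proof. exact: comp_mpolyZ. Qed.

Lemma phi_sum (I : Type) (r : seq I) (P : pred I) (F : I -> R) :
  phi (\sum_(j <- r | P j) F j) = \sum_(j <- r | P j) phi (F j).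
Proof. by rewrite /phi raddf_sum. Qed.

Lemma phiB p q : phi (p - q) = phi p - phi q.
Proof. by rewrite /phi rmorphB. Qed.
Lemma phiM p q : phi (p * q) = phi p * phi q.
Proof. by rewrite /phi rmorphM. Qed.

Lemma phi_dp i p : dp i (phi p) = (w i)%:R *: phi (dp i p).
Proof.
rewrite [p in RHS]mpolyE [p in LHS]mpolyE phi_sum dp_sum dp_sum phi_sum.
rewrite scaler_sumr; apply: eq_bigr => a _.
rewrite phiZ dpZ dpZ phiZ phiX dpX dpX phiZ phiX mnmE.
by rewrite !scalerA natrM; congr (_ *: _); ring.
Qed.


Hypothesis wpos : forall i, (0 < w i)%N.

Lemma wm_inj : injective wm.
Proof.
move=> a b /mnmP e; apply/mnmP => i; have := e i; rewrite !mnmE.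
by move/eqP; rewrite eqn_pmul2l // => /eqP.
Qed.

Lemma phi_coef p a : (phi p)@_(wm a) = p@_a.
Proof.
rewrite phiE [p in RHS]mpolyE !raddf_sum /=; apply: eq_bigr => a' _.
by rewrite !mcoeffZ !mcoeffX (inj_eq wm_inj).
Qed.

Lemma phi_supp p b : b \in msupp (phi p) -> exists2 a, a \in msupp p & b = wm a.
Proof.
move=> bin; case: (boolP (has (fun a => wm a == b) (msupp p))).
  by case/hasP => a ain /eqP <-; exists a.
move/hasPn => h; move: bin; rewrite mcoeff_msupp phiE raddf_sum /= big1_seq ?eqxx // => a /andP[_ ain].
by rewrite mcoeffZ mcoeffX (negbTE (h a ain)) mulr0.
Qed.
End Phi.

Lemma baseB_inj B N (f g : nat -> nat) :
  (forall i, i < N -> f i < B /\ g i < B)%N ->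
  (\sum_(i < N) f i * B ^ i = \sum_(i < N) g i * B ^ i)%N ->
  forall i, (i < N)%N -> f i = g i.
Proof.
elim: N f g => [//|N ih] f g hb.
rewrite !big_ord_recl /= !expn0 !muln1.
under eq_bigr => i _ do rewrite /bump /= add1n expnS mulnCA.
under [in X in _ = X -> _]eq_bigr => i _ do rewrite /bump /= add1n expnS mulnCA.
rewrite -!big_distrr /= => e.
have [f0 g0] := hb 0%N isT.
have B0 : (0 < B)%N by apply: leq_ltn_trans f0.
have e0 : f 0%N = g 0%N.
  have := congr1 (modn^~ B) e; rewrite /= !(addnC (f 0%N)) !(addnC (g 0%N)).
  by rewrite ![(B * _)%N]mulnC !modnMDl !modn_small.
move: e; rewrite e0 => /addnI /eqP; rewrite eqn_pmul2l // => /eqP e.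
move=> [|i] iN //.
apply: (ih (fun j => f j.+1) (fun j => g j.+1)) => // j jN; exact: hb.
Qed.

Lemma seq_argmax (T : eqType) (s : seq T) (f : T -> nat) :
  s != [::] -> exists2 x, x \in s & forall y, y \in s -> (f y <= f x)%N.
Proof.
elim: s => [//|x s ih] _.
have [->|ne] := eqVneq s [::].
  by exists x; rewrite ?mem_head // => y; rewrite mem_seq1 => /eqP ->.
have [z zs zm] := ih ne.
have [le|lt] := leqP (f x) (f z).
  exists z; first by rewrite in_cons zs orbT.
  by move=> y; rewrite in_cons => /predU1P [->|/zm].
exists x; first exact: mem_head.
move=> y; rewrite in_cons => /predU1P [->//|/zm h]; exact: leq_trans h (ltnW lt).
Qed.

Lemma polyA (k : fieldType) (n : nat) (Q : {mpoly k[n]}) (u : 'I_n -> {mpoly k[n]}) (c : k) :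
  [pchar k] =i pred0 -> Q != 0 ->
  \sum_i (dp i (u i) * Q - u i * dp i Q) = c%:MP * Q ^+ 2 -> c = 0.
Proof.
move=> ch Q0 eq.
set B := (\max_(a <- msupp Q) \max_(i < n) a i).+1%N.
pose w (i : 'I_n) := (B ^ i)%N.
have wpos : forall i, (0 < w i)%N by move=> i; rewrite expn_gt0.
have wk0 : forall i, (w i)%:R != 0 :> k.
  by move=> i; have /pcharf0P -> := ch; rewrite -lt0n.
have digits : forall a, a \in msupp Q -> forall i, (a i < B)%N.
  move=> a aQ i; rewrite /B ltnS.
  have h1 := @leq_bigmax_seq _ (msupp Q) xpredT (fun a : 'X_{1..n} => \max_(i < n) a i)%N a aQ isT.
  exact: leq_trans (@leq_bigmax _ (fun i => a i) i) h1.
have encE : forall a, mdeg (wm w a) = (\sum_(i < n) nth 0%N a i * B ^ i)%N.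
  move=> a; rewrite mdegE; apply: eq_bigr => i _; rewrite mnmE -mnm_nth mulnC.
  by [].
have sn : msupp Q != [::] by rewrite msupp_eq0.
have [m0 m0Q m0max] := seq_argmax (fun a => mdeg (wm w a)) sn.
have encI : forall a, a \in msupp Q -> mdeg (wm w a) = mdeg (wm w m0) -> a = m0.
  move=> a aQ; rewrite !encE => e; apply/mnmP => i; rewrite !(mnm_nth 0%N).
  apply: (baseB_inj _ e) => // j jn.
  have := digits a aQ (Ordinal jn); have := digits m0 m0Q (Ordinal jn).
  by rewrite !(mnm_nth 0%N) /=; split.
apply: (@polyA_top k n (wm w m0) (phi w Q) (fun i => (w i)%:R^-1 *: phi w (u i)) c).
- by rewrite phi_coef // -mcoeff_msupp.
- move=> b /phi_supp [] // a aQ -> ne.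
  have ne' : a != m0 by apply: contraNneq ne => ->.
  rewrite ltn_neqAle m0max // andbT; apply: contra ne' => /eqP e.
  by apply/eqP; apply: encI.
- have := congr1 (phi w) eq.
  rewrite phi_sum.
  have -> : phi w (c%:MP * Q ^+ 2) = c%:MP * (phi w Q) ^+ 2.
    by rewrite /phi rmorphM rmorphXn /= comp_mpolyC.
  move=> <-.
  apply: eq_bigr => i _.
  rewrite phiB !phiM !phi_dp dpZ.
  rewrite -!scalerAl -!scalerAr !scalerA mulVf // !scale1r.
  by rewrite phi_dp -scalerAl scalerA mulVf // scale1r.
Qed.

Section Main.
Variables (k : fieldType) (n : nat) (lam : 'M[k]_n).
Local Notation R := {mpoly k[n]}.
Local Notation K := (ratfun k n).
Local Notation "x %:F" := (@tofrac R x).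
Local Notation dp := (@dp k n).
Local Notation dK := (@dK k n).

Lemma pbracketE f g : pbracket lam f g =
  \sum_i \sum_j ratC n (lam i j) * dK i f * dK j g.
Proof.
apply: eq_bigr => i _; apply: eq_bigr => j _; rewrite /dK.
ring.
Qed.

Hypothesis ch : [pchar k] =i pred0.

Lemma partA_K (H : 'I_n -> K) c : \sum_i dK i (H i) = ratC n c -> c = 0.
Proof.
move=> e.
pose a i := \n_(repr (H i)); pose b i := \d_(repr (H i)).
have bne i : b i != 0 by exact: repr_d0.
pose Q := \prod_i b i.
pose u i := a i * \prod_(j | j != i) b j.
have Q0 : Q != 0 by apply/prodf_neq0 => i _.
have HQ i : H i = (u i)%:F / Q%:F.
  rewrite [H i]frac_repr -/(a i) -/(b i); apply: frac_eqP => //.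
  by rewrite /Q /u (bigD1 i) //=; ring.
move: e; under eq_bigr => i _ do rewrite HQ dK_frac //.
rewrite -mulr_suml -rmorph_sum /ratC => e.
have e2 := congr1 (fun t => t * (Q ^+ 2)%:F) e; rewrite /= mulfVK ?tf0 ?expf_neq0 // in e2.
move: e2; rewrite -tofracM => /eqP; rewrite tofrac_eq => /eqP e3.
exact: (polyA ch Q0 e3).
Qed.

Hypothesis hlam : lam^T = - lam.

Lemma lam_anti i j : lam j i = - lam i j.
Proof. by have := congr1 (fun M : 'M[k]_n => M i j) hlam; rewrite !mxE. Qed.

Lemma two_neq0 : (2%:R : K) != 0.
Proof.
rewrite -(rmorph_nat (@tofrac R)) tf0 // -mpolyC_nat mpolyC_eq0.
by have /pcharf0P -> := ch.
Qed.

Lemma sym_sum0 (T : 'I_n -> 'I_n -> K) : (forall i j, T i j = T j i) ->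
  \sum_i \sum_j ratC n (lam i j) * T i j = 0.
Proof.
move=> hT; set S := (X in X = 0).
have e : S = - S.
  rewrite {1}/S exchange_big /= /S -sumrN; apply: eq_bigr => i _.
  rewrite -sumrN; apply: eq_bigr => j _.
  by rewrite lam_anti /ratC mpolyCN tofracN hT mulNr.
have : S * 2%:R = 0 by rewrite mulr_natr mulr2n {1}e addNr.
by move/eqP; rewrite mulf_eq0 (negbTE two_neq0) orbF => /eqP.
Qed.

Lemma pbr_div f g : pbracket lam f g =
  \sum_i dK i (\sum_j ratC n (lam i j) * (f * dK j g)).
Proof.
rewrite pbracketE.
have -> : \sum_i dK i (\sum_j ratC n (lam i j) * (f * dK j g)) =
   \sum_i \sum_j ratC n (lam i j) * dK i f * dK j g +
   f * \sum_i \sum_j ratC n (lam i j) * dK i (dK j g).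
  rewrite mulr_sumr -big_split /=; apply: eq_bigr => i _.
  rewrite dK_sum mulr_sumr -big_split /=; apply: eq_bigr => j _.
  by rewrite dKZ dKM; ring.
rewrite sym_sum0 ?mulr0 ?addr0 // => i j; exact: dK_comm.
Qed.

Lemma partA (s : seq (k * K * K)) (c : k) :
  \sum_(t <- s) ratC n t.1.1 * pbracket lam t.1.2 t.2 = ratC n c -> c = 0.
Proof.
move=> e; apply: (partA_K (H := fun i => \sum_(t <- s) ratC n t.1.1 *
   \sum_j ratC n (lam i j) * (t.1.2 * dK j t.2))).
rewrite -e; under eq_bigr => i _ do rewrite dK_sum.
rewrite exchange_big /=; apply: eq_bigr => t _.
by rewrite pbr_div mulr_sumr; apply: eq_bigr => i _; rewrite dKZ.
Qed.

Lemma CmatE (y : 'I_n -> K) i j :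
  Cmat lam y i j = \sum_a \sum_b ratC n (lam a b) * (dK a (y i) / y i) * (dK b (y j) / y j).
Proof.
rewrite mxE pbracketE mulr_suml; apply: eq_bigr => a _.
rewrite mulr_suml; apply: eq_bigr => b _; rewrite invfM; ring.
Qed.

Lemma ratioE a (p q : R) : p != 0 -> q != 0 ->
  dK a (p%:F / q%:F) / (p%:F / q%:F) = (dp a p * q - p * dp a q)%:F / (p * q)%:F.
Proof.
move=> p0 q0; rewrite dK_frac // invf_div fracM.
by apply: frac_eqP; rewrite ?mulf_neq0 ?expf_neq0 //; ring.
Qed.

Lemma ratCD (x y : k) : ratC n (x + y) = ratC n x + ratC n y.
Proof. by rewrite /ratC mpolyCD tofracD. Qed.
Lemma ratCM (x y : k) : ratC n (x * y) = ratC n x * ratC n y.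
Proof. by rewrite /ratC mpolyCM tofracM. Qed.
Lemma ratC0 : ratC n (0 : k) = 0.
Proof. by rewrite /ratC mpolyC0 tofrac0. Qed.
Lemma ratC_sum (I : Type) (r : seq I) (P : pred I) (F : I -> k) :
  ratC n (\sum_(j <- r | P j) F j) = \sum_(j <- r | P j) ratC n (F j).
Proof. exact: (big_morph _ ratCD ratC0). Qed.

Lemma mX_neq0 (m : 'X_{1..n}) : ('X_[m] : R) != 0.
Proof. by apply/eqP => /(congr1 (mcoeff m)); rewrite mcoeffX eqxx mcoeff0 => /eqP; rewrite oner_eq0. Qed.

Definition pa (z : int) : nat := if (0 <= z)%R then `|z|%N else 0%N.
Definition na (z : int) : nat := if (0 <= z)%R then 0%N else `|z|%N.

Lemma pa_na (z : int) : (pa z)%:R - (na z)%:R = z%:~R :> k.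
Proof.
rewrite /pa /na; case: z => m /=; first by rewrite subr0.
by rewrite sub0r NegzE mulrNz.
Qed.

Lemma partB_back (A : 'M[int]_n) : exists y : 'I_n -> K,
  (forall i, y i != 0) /\
  Cmat lam y = map_mx (@ratC k n) (map_mx intr A *m lam *m (map_mx intr A)^T).
Proof.
pose am i := [multinom pa (A i c) | c < n].
pose bm i := [multinom na (A i c) | c < n].
pose y i := ('X_[am i] : R)%:F / ('X_[bm i] : R)%:F.
have y0 i : y i != 0 by rewrite mulf_neq0 ?invr_eq0 ?tf0 ?mX_neq0.
have hr i a : dK a (y i) / y i = ratC n ((A i a)%:~R).
  rewrite ratioE ?mX_neq0 // !dpX.
  rewrite -scalerAl -scalerAr -scalerBl /ratC -mul_mpolyC tofracM mulfK ?tf0 ?mulf_neq0 ?mX_neq0 //.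
  by rewrite !mnmE pa_na.
exists y; split => //; apply/matrixP => i j.
rewrite CmatE !mxE; under eq_bigr => a _ do under eq_bigr => b _ do rewrite !hr.
rewrite ratC_sum exchange_big /=; apply: eq_bigr => b _; rewrite !mxE ratCM ratC_sum mulr_suml; apply: eq_bigr => a _.
by rewrite !mxE !ratCM; ring.
Qed.

Lemma mlead_dp a (p : R) : (mlead (dp a p) <= mlead p)%O.
Proof.
have [->|nz] := eqVneq (dp a p) 0; first by rewrite mlead0 le0m.
apply: msupp_le_mlead; have := mlead_supp nz; rewrite !mcoeff_msupp dp_coef.
by apply: contraNN => /eqP ->; rewrite mulr0.
Qed.

Lemma N_lead a (p q : R) : p != 0 -> q != 0 ->
  (mlead (dp a p * q - p * dp a q) <= mlead (p * q))%O /\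
  (dp a p * q - p * dp a q)@_(mlead (p * q)) =
    ((mlead p a)%:R - (mlead q a)%:R) * mleadc (p * q).
Proof.
move=> p0 q0; rewrite mleadM //; split.
  apply: le_trans (mleadB_le _ _) _; rewrite leUx; apply/andP; split.
    apply: le_trans (mleadM_le _ _) _; exact: lem_add (mlead_dp a p) (lexx _).
  apply: le_trans (mleadM_le _ _) _; exact: lem_add (lexx _) (mlead_dp a q).
rewrite mcoeffB !mleadcMW ?mlead_dp ?lexx // !dp_coef; ring.
Qed.

Lemma partB_fwd (M : 'M[k]_n) (y : 'I_n -> K) :
  (forall i, y i != 0) -> Cmat lam y = map_mx (@ratC k n) M ->
  exists A : 'M[int]_n, M = map_mx intr A *m lam *m (map_mx intr A)^T.
Proof.
move=> y0 hC.
pose p i := \n_(repr (y i)); pose q i := \d_(repr (y i)).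
have q0 i : q i != 0 by exact: repr_d0.
have yE i : y i = (p i)%:F / (q i)%:F by exact: frac_repr.
have p0 i : p i != 0.
  by apply: contraNneq (y0 i) => e; rewrite yE e tofrac0 mul0r.
pose e i a : int := ((mlead (p i) a)%:Z - (mlead (q i) a)%:Z)%R.
exists (\matrix_(i, a) e i a); apply/matrixP => i j.
pose N i' a := dp a (p i') * q i' - p i' * dp a (q i').
pose P i' := p i' * q i'.
have P0 i' : P i' != 0 by rewrite mulf_neq0.
have hij := congr1 (fun X : 'M[K]_n => X i j) hC; rewrite /= CmatE mxE in hij.
have hij2 : (\sum_a \sum_b (lam a b)%:MP * N i a * N j b)%:F / (P i * P j)%:F =
    (ratC n (M i j)).
  rewrite -hij rmorph_sum mulr_suml; apply: eq_bigr => a _.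
  rewrite rmorph_sum mulr_suml; apply: eq_bigr => b _.
  rewrite (yE i) (yE j) !ratioE // /ratC /= /N !tofracM !invfM; ring.
have e2 := congr1 (fun t => t * (P i * P j)%:F) hij2.
rewrite /= mulfVK ?tf0 ?mulf_neq0 // /ratC -tofracM in e2.
move/eqP: e2; rewrite tofrac_eq => /eqP e2.
have lcP i' : mleadc (P i') != 0 by rewrite mleadc_eq0.
have e3 := congr1 (mcoeff (mlead (P i) + mlead (P j))) e2.
rewrite mcoeffCM mleadcM raddf_sum /= in e3.
have e4 : M i j * (mleadc (P i) * mleadc (P j)) =
   (\sum_a \sum_b lam a b * (((mlead (p i) a)%:R - (mlead (q i) a)%:R) *
        ((mlead (p j) b)%:R - (mlead (q j) b)%:R))) * (mleadc (P i) * mleadc (P j)).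
  rewrite -e3 mulr_suml; apply: eq_bigr => a _.
  rewrite raddf_sum mulr_suml /=; apply: eq_bigr => b _.
  have [l1 c1] := N_lead a (p0 i) (q0 i).
  have [l2 c2] := N_lead b (p0 j) (q0 j).
  rewrite -mulrA mcoeffCM mleadcMW // -/(N i a) -/(N j b).
  rewrite /N /P in c1 c2 *; rewrite c1 c2; ring.
move/mulIf: e4 => /(_ (mulf_neq0 (lcP i) (lcP j))) ->.
rewrite !mxE exchange_big /=; apply: eq_bigr => b _; rewrite !mxE mulr_suml; apply: eq_bigr => a _.
by rewrite !mxE /e !intrB !pmulrn; ring.
Qed.
End Main.

Theorem proposition5p2 (k : fieldType) (n : nat) (lam : 'M[k]_n) :
  [pchar k] =i pred0 ->
  lam^T = - lam ->
  (forall (s : seq (k * ratfun k n * ratfun k n)) (c : k),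
      \sum_(t <- s) ratC n t.1.1 * pbracket lam t.1.2 t.2 = ratC n c ->
      c = 0)
  /\
  (forall M : 'M[k]_n,
      (exists y : 'I_n -> ratfun k n,
          (forall i, y i != 0) /\ Cmat lam y = map_mx (@ratC k n) M)
      <->
      (exists A : 'M[int]_n,
          M = map_mx intr A *m lam *m (map_mx intr A)^T)).
Proof.
move=> ch hlam; split.
  by move=> s c; apply: partA.
move=> M; split.
  by move=> [y [y0 hC]]; apply: (partB_fwd y0 hC).
by move=> [A ->]; apply: partB_back.
Qed.
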